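(* Z-light-first order is energy-bound: for every constant $\Delta\ge1$ there is a constant $C$ (depending only on $\Delta$) such that for every rooted tree $T$ with $n$ vertices, every vertex having at most $\Delta$ children, stored in Z-light-first order, the total energy $\sum_{v}\sum_{c \text{ child of } v} \mathrm{dist}(p_v,p_c)$ of every vertex sending a message to each of its children is at most $C n$.
   Context: Processors sit on the cells of a two-dimensional grid; sending a message between processors at $(x_1,y_1)$ and $(x_2,y_2)$ costs energy $|x_1-x_2|+|y_1-y_2|$. Z-order (Morton order) is the enumeration of grid cells $(x,y)$, $x,y\in\{0,\dots,2^m-1\}$, in which the cell at position $i$ (counting from $0$) has $x$ equal to the number formed by the even-indexed bits of $i$ and $y$ equal to the number formed by the odd-indexed bits of $i$ (bit $2t$ of $i$ is bit $t$ of $x$, bit $2t+1$ of $i$ is bit $t$ of $y$). $\mathrm{dist}(i,j)$ is the energy of sending a message from the processor at position $i$ to the one at position $j$. Light-first order: each tree vertex $v$ is stored in one processor at position $p_v$ (root at the first position). Let $s(v)$ be the size of the subtree rooted at $v$. For each vertex $v$ with children indexed $c_1,\dots,c_d$ with $s(c_1)\le\dots\le s(c_d)$, child $c_i$ is stored at position $p_v+1+\sum_{j=1}^{i-1}s(c_j)$. Z-light-first order is light-first order with respect to Z-order. *)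

(* Defs.v *)
From mathcomp Require Import all_boot.
Set Implicit Arguments.
Unset Strict Implicit.
Unset Printing Implicit Defensive.

Definition bit (i k : nat) : nat := odd (i %/ 2 ^ k).

(* x-coordinate of position i: number formed by the even-indexed bits of i.
   Bits of index >= 2*(i+1) of i are zero, so the finite sum is exact. *)
Definition zx (i : nat) : nat := \sum_(t < i.+1) bit i (2 * t) * 2 ^ t.
(* y-coordinate: number formed by the odd-indexed bits of i *)
Definition zy (i : nat) : nat := \sum_(t < i.+1) bit i (2 * t).+1 * 2 ^ t.

Definition absdiff (a b : nat) : nat := (a - b) + (b - a).

Definition dist (i j : nat) : nat :=
  absdiff (zx i) (zx j) + absdiff (zy i) (zy j).

Inductive tree := Node of seq tree.

Fixpoint tree_size (t : tree) : nat :=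
  let: Node cs := t in (sumn (map tree_size cs)).+1.

Fixpoint max_children (D : nat) (t : tree) : bool :=
  let: Node cs := t in (size cs <= D) && all (max_children D) cs.

(* children listed in nondecreasing order of subtree size (at every vertex);
   ties are broken by the (arbitrary) order of the list *)
Fixpoint light_sorted (t : tree) : bool :=
  let: Node cs := t in
  sorted (fun a b => tree_size a <= tree_size b) cs && all light_sorted cs.

(* Total energy of the light-first layout: the root of t is stored at position
   p, and the i-th child c_i of a vertex at p_v is stored at
   p_v + 1 + sum_{j<i} s(c_j). *)
Fixpoint lf_energy (t : tree) (p : nat) : nat :=
  let: Node cs := t in
  (fix go (cs : seq tree) (q : nat) : nat :=
     match cs with
     | [::] => 0
     | c :: cs' => dist p q + lf_energy c q + go cs' (q + tree_size c)
     end) cs p.+1.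

(* Main.v *)
Require Import Defs.
From mathcomp Require Import all_boot zify.
Set Implicit Arguments.
Unset Strict Implicit.
Unset Printing Implicit Defensive.

Definition zf (o n i : nat) : nat := \sum_(t < n) bit i (2 * t + o) * 2 ^ t.

Lemma zf_rec o n i : o <= 1 -> zf o n.+1 i = bit i o + 2 * zf o n (i %/ 4).
Proof.
move=> ho; rewrite /zf big_ord_recl /= expn0 muln1; congr (_ + _).
rewrite big_distrr /=; apply: eq_bigr => t _.
rewrite expnS mulnCA; congr (_ * _); rewrite /bit.
have -> : 2 * bump 0 t + o = 2 + (2 * t + o) by rewrite /bump /=; lia.
by rewrite expnD divnMA.
Qed.

Lemma zf_stable o i d : o <= 1 -> zf o (i.+1 + d) i = zf o i.+1 i.
Proof.
move=> ho; elim: d => [|d IH]; first by rewrite addn0.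
rewrite addnS /zf big_ord_recr /= -/(zf o _ i) IH.
suff -> : bit i (2 * (i.+1 + d) + o) = 0 by rewrite mul0n addn0.
rewrite /bit divn_small //.
apply: leq_ltn_trans (ltn_expl _ (isT : 1 < 2)); lia.
Qed.

Lemma zf_stable2 o i n m : o <= 1 -> i < n -> i < m -> zf o n i = zf o m i.
Proof.
move=> ho hn hm.
rewrite -(subnKC hn) -(subnKC hm) !zf_stable //.
Qed.

Lemma zx_zf i : zx i = zf 0 i.+1 i.
Proof. by rewrite /zx /zf; apply: eq_bigr => t _; rewrite addn0. Qed.
Lemma zy_zf i : zy i = zf 1 i.+1 i.
Proof. by rewrite /zy /zf; apply: eq_bigr => t _; rewrite addn1. Qed.

Lemma zf_dec o i : o <= 1 -> zf o i.+1 i = bit i o + 2 * zf o (i %/ 4).+1 (i %/ 4).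
Proof.
move=> ho; rewrite zf_rec //; congr (_ + 2 * _).
case: i => [|i]; first by rewrite div0n /zf big_ord0 big_ord1 /bit div0n.
apply: zf_stable2 => //.
by apply: ltn_Pdiv.
Qed.

Lemma bit_le1 i o : bit i o <= 1.
Proof. by rewrite /bit; case: odd. Qed.

Lemma dist_rec i j : dist i j <= 2 + 2 * dist (i %/ 4) (j %/ 4).
Proof.
rewrite /dist /absdiff !zx_zf !zy_zf (zf_dec i) // (zf_dec j) // (zf_dec i (o:=1)) //
  (zf_dec j (o:=1)) //.
have := bit_le1 i 0; have := bit_le1 j 0; have := bit_le1 i 1; have := bit_le1 j 1.
lia.
Qed.

Lemma dist_refl i : dist i i = 0.
Proof. by rewrite /dist /absdiff !subnn. Qed.

Definition cross (M a b : nat) : nat := (a %/ M != b %/ M).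

Definition W (K i j : nat) : nat := \sum_(k < K) 2 ^ k.+1 * cross (4 ^ k) i j.

Lemma dist_W K i j : i < 4 ^ K -> j < 4 ^ K -> dist i j <= W K i j.
Proof.
elim: K i j => [|K IH] i j hi hj.
  rewrite expn0 in hi hj; have -> : i = 0 by lia. have -> : j = 0 by lia.
  by rewrite dist_refl.
case: (eqVneq i j) => [->|hij]; first by rewrite dist_refl.
rewrite /W big_ord_recl /= expn0 /cross !divn1 hij muln1.
apply: (leq_trans (dist_rec i j)); rewrite leq_add2l.
have hi' : i %/ 4 < 4 ^ K by rewrite ltn_divLR // -expnSr.
have hj' : j %/ 4 < 4 ^ K by rewrite ltn_divLR // -expnSr.
apply: (leq_trans (leq_mul (leqnn 2) (IH _ _ hi' hj'))).
rewrite /W big_distrr /= leq_eqVlt; apply/orP; left; apply/eqP; apply: eq_bigr => k _.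
by rewrite /bump /= add1n (expnS 2 k.+1) mulnA (expnS 4) !divnMA.
Qed.
Definition treeAll (P : tree -> Prop) (cs : seq tree) : Prop :=
  foldr (fun c A => P c /\ A) True cs.

Fixpoint tree_ind2 (P : tree -> Prop)
  (H : forall cs, treeAll P cs -> P (Node cs)) (t : tree) : P t :=
  let: Node cs := t in
  H cs ((fix go (cs : seq tree) : treeAll P cs :=
           match cs return treeAll P cs with
           | [::] => I
           | c :: cs' => conj (tree_ind2 H c) (go cs')
           end) cs).

Fixpoint edges (t : tree) (p : nat) : seq (nat * nat) :=
  let: Node cs := t in
  (fix go (cs : seq tree) (q : nat) : seq (nat * nat) :=
     match cs with
     | [::] => [::]
     | c :: cs' => (p, q) :: edges c q ++ go cs' (q + tree_size c)
     end) cs p.+1.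

Fixpoint goE (p : nat) (cs : seq tree) (q : nat) : seq (nat * nat) :=
  match cs with
  | [::] => [::]
  | c :: cs' => (p, q) :: edges c q ++ goE p cs' (q + tree_size c)
  end.

Lemma edges_Node cs p : edges (Node cs) p = goE p cs p.+1.
Proof. by rewrite /=; elim: cs p.+1 => //= c cs IH q; rewrite IH. Qed.

Definition esum (f : nat -> nat -> nat) (s : seq (nat * nat)) : nat :=
  \sum_(e <- s) f e.1 e.2.

Lemma esum_cons f e s : esum f (e :: s) = f e.1 e.2 + esum f s.
Proof. by rewrite /esum big_cons. Qed.
Lemma esum_cat f s1 s2 : esum f (s1 ++ s2) = esum f s1 + esum f s2.
Proof. by rewrite /esum big_cat. Qed.

Lemma lf_energy_edges t p : lf_energy t p = esum dist (edges t p).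
Proof.
elim/tree_ind2: t p => cs IH p; rewrite edges_Node /=.
elim: cs IH p.+1 => [|c cs IHl] /=; first by move=> _ q; rewrite /esum big_nil.
move=> [IHc IHcs] q.
rewrite esum_cons esum_cat. rewrite IHc. rewrite (IHl IHcs). by rewrite addnA.
Qed.

Lemma tree_size_Node cs : tree_size (Node cs) = (sumn (map tree_size cs)).+1.
Proof. by []. Qed.

Lemma tree_size_gt0 t : 0 < tree_size t.
Proof. by case: t. Qed.

Lemma goE_range p cs q N e :
  treeAll (fun c => forall p e, e \in edges c p -> p <= e.1 /\ e.1 < e.2 /\ e.2 < p + tree_size c) cs ->
  p < q -> q + sumn (map tree_size cs) <= N ->
  e \in goE p cs q -> p <= e.1 /\ e.1 < e.2 /\ e.2 < N.
Proof.
elim: cs q => [|c cs IHl] q /=; first by [].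
move=> [IHc IHcs] hq hN.
have := tree_size_gt0 c => hc.
rewrite in_cons mem_cat => /orP [/eqP -> /=|/orP [/IHc|]].
- split; [lia|split; lia].
- move=> [h1 [h3 h2]]; split; [lia|split; lia].
- apply: (IHl _ IHcs); lia.
Qed.

Lemma edges_range t p e : e \in edges t p -> p <= e.1 /\ e.1 < e.2 /\ e.2 < p + tree_size t.
Proof.
elim/tree_ind2: t p e => cs IH p e; rewrite edges_Node tree_size_Node.
apply: goE_range => //; lia.
Qed.
Definition Cc (M a b : nat) : nat := b %/ M - a %/ M.
Definition hE (E x : nat) : nat := \sum_(e < E.+1) (2 ^ e <= x).
Definition gg (D E x : nat) : nat := D * (1 + hE E x).
Definition big (M D x : nat) : bool := M <= D * x.
Arguments big : simpl never.

Lemma Cc_add M a b c : a <= b -> b <= c -> Cc M a c = Cc M a b + Cc M b c.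
Proof.
move=> hab hbc; rewrite /Cc.
have := leq_div2r M hab; have := leq_div2r M hbc; lia.
Qed.

Lemma cross_Cc M a b : a <= b -> cross M a b <= Cc M a b.
Proof.
move=> hab; rewrite /cross /Cc; have := leq_div2r M hab.
case: eqP => /= h; lia.
Qed.

Lemma cross_le1 M a b : cross M a b <= 1.
Proof. by rewrite /cross; case: eqP. Qed.

Lemma hE_mono E x y : x <= y -> hE E x <= hE E y.
Proof.
move=> hxy; rewrite /hE; apply: leq_sum => e _.
case h: (2 ^ e <= x) => //=; by rewrite (leq_trans h hxy).
Qed.

Lemma hE_le E x : hE E x <= E.+1.
Proof.
rewrite /hE; apply: (@leq_trans (\sum_(e < E.+1) 1)).
  by apply: leq_sum => e _; apply: leq_b1.
by rewrite sum1_card card_ord.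
Qed.

Lemma hE_step E x y : x < 2 ^ E -> 2 * x < y -> (hE E x).+1 <= hE E y.
Proof.
move=> hx hy; rewrite /hE big_ord_recr big_ord_recl /= expn0.
have -> : (2 ^ E <= x) = false by apply/negbTE; rewrite -ltnNge.
have -> : (1 <= y) = true by apply/idP; lia.
rewrite addn0 add1n ltnS; apply: leq_sum => e _.
case h: (2 ^ e <= x) => //=; apply/idP.
rewrite /bump /= add1n expnS; lia.
Qed.

Fixpoint Rl (M D E p : nat) (ss : seq nat) (q : nat) : nat :=
  match ss with
  | [::] => 0
  | x :: ss' => cross M p q + gg D E x * Cc M q (q + x - 1) + Rl M D E p ss' (q + x)
  end.

Fixpoint shortc (M p : nat) (ss : seq nat) (q : nat) : nat :=
  match ss with
  | [::] => 0
  | x :: ss' => (q - p <= M) + shortc M p ss' (q + x)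
  end.

Fixpoint longc (M p : nat) (ss : seq nat) (q : nat) : nat :=
  match ss with
  | [::] => 0
  | x :: ss' => (M < q - p) + longc M p ss' (q + x)
  end.

Lemma shortc_le M p ss q : shortc M p ss q <= (q - p <= M) * size ss.
Proof.
elim: ss q => [|x ss IH] q //=.
apply: (leq_trans (leq_add (leqnn _) (IH _))).
case h: (q - p <= M); case h': (q + x - p <= M) => /=; lia.
Qed.

Lemma Rl_bound M D E p s ss q : M = 2 ^ E -> p < q -> size ss <= D ->
  sorted leq ss -> all (fun x => 0 < x) ss -> sumn ss < s ->
  Rl M D E p ss q <= shortc M p ss q * Cc M p q.-1
                    + gg D E s * Cc M q.-1 (q.-1 + sumn ss) + longc M p ss q.
Proof.
move=> hM; elim: ss q => [|x ss IH] q hq hD hsort hpos hs /=; first by [].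
move: hpos => /andP [hx hpos]; rewrite /= in hs hD.
have hsort' : sorted leq ss by move: hsort; case: (ss) => //= y ss' /andP [].
have hs' : sumn ss < s by lia.
have IH' := IH (q + x) ltac:(lia) ltac:(lia) hsort' hpos hs'.
have hgx : gg D E x <= gg D E s by rewrite /gg leq_mul2l; apply/orP; right; rewrite ltnS hE_mono //; lia.
have hC1 : Cc M q.-1 (q.-1 + (x + sumn ss)) =
  Cc M q.-1 q + Cc M q (q + x - 1) + Cc M (q + x).-1 ((q + x).-1 + sumn ss).
  have -> : (q + x).-1 = q + x - 1 by lia.
  rewrite (@Cc_add M q.-1 q (q.-1 + (x + sumn ss))); [|lia|lia].
  rewrite (@Cc_add M q (q + x - 1) (q.-1 + (x + sumn ss))); [|lia|lia].
  have -> : q.-1 + (x + sumn ss) = q + x - 1 + sumn ss by lia.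
  by rewrite addnA.
have hscl := shortc_le M p ss (q + x).
case: (leqP (q - p) M) => hshort /=.
-
  have hC2 : Cc M p (q + x).-1 = Cc M p q.-1 + Cc M q.-1 q + Cc M q (q + x - 1).
    have -> : (q + x).-1 = q + x - 1 by lia.
    rewrite (@Cc_add M p q.-1 (q + x - 1)); [|lia|lia].
    rewrite (@Cc_add M q.-1 q (q + x - 1)); [|lia|lia].
    by rewrite addnA.
  have hcr : cross M p q <= Cc M p q.-1 + Cc M q.-1 q.
    rewrite -(@Cc_add M p q.-1 q); [|lia|lia]; apply: cross_Cc; lia.
  set sc := shortc M p ss (q + x) in IH' hscl *.
  have hsz : sc <= size ss by move: hscl; case: (q + x - p <= M) => /=; lia.
  have hG : D <= gg D E s by rewrite /gg; apply: leq_pmulr.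
  have h1 : 1 + sc <= gg D E s by move: hD hG => /=; lia.
  have h2 : gg D E x + sc <= gg D E s.
    case: (posnP sc) => [->|hsc]; first by rewrite addn0.
    have hqx : q + x - p <= M by move: hscl; case: (q + x - p <= M) => /=; lia.
    have hxM : x < 2 ^ E by rewrite -hM; lia.
    have h2x : 2 * x < s.
      move: hsort hsz hsc hs; case: (ss) => [|y ss'] /=; first by lia.
      by move=> /andP [hxy _] _ _; lia.
    have hst := hE_step hxM h2x.
    apply: (leq_trans (leq_add (leqnn _) (_ : _ <= D))); first by lia.
    by rewrite /gg -mulnSr leq_mul2l; apply/orP; right; lia.
  have m1 := leq_mul (leqnn (Cc M q.-1 q)) h1.
  have m2 := leq_mul (leqnn (Cc M q (q + x - 1))) h2.
  rewrite hC1.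
  move: IH'; rewrite hC2; move: hcr m1 m2; rewrite !mulnDr !mulnDl; lia.
-
  have hf : (q + x - p <= M) = false by apply/negbTE; rewrite -ltnNge; lia.
  have hsc : shortc M p ss (q + x) = 0 by move: hscl; rewrite hf mul0n; lia.
  move: IH'; rewrite hsc hC1 mul0n add0n.
  have := cross_le1 M p q.
  have := leq_mul (leqnn (Cc M q (q + x - 1))) hgx.
  rewrite !mulnDr !mulnDl; lia.
Qed.

Lemma longc_bound M D p ss q m np : p < q -> path leq m ss -> all (fun x => 0 < x) ss ->
  q - p - 1 <= np * m -> np + size ss <= D ->
  longc M p ss q <= count (big M D) ss - (q - p <= M).
Proof.
elim: ss q m np => [|x ss IH] q m np hq hpath hpos hP hD /=; first by [].
move: hpath => /andP [hmx hpath]; move: hpos => /andP [hx hpos].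
rewrite /= in hD.
have hnm := leq_mul (leqnn np) hmx.
have hDx : x + np * x <= D * x by rewrite -mulSn; apply: leq_mul => //; lia.
have IH' := IH (q + x) x np.+1 ltac:(lia) hpath hpos ltac:(rewrite mulSn; lia) ltac:(lia).
case: (leqP (q - p) M) => hs /=.
- have hl : (M < q - p) = false by rewrite ltnNge hs.
  case: (leqP (q + x - p) M) => hs' /=.
  + move: IH'; rewrite hs' /=.
    case: (big M D x); lia.
  + have hf : (q + x - p <= M) = false by apply/negbTE; rewrite -ltnNge.
    move: IH'; rewrite hf /=.
    have -> : big M D x = true by apply/idP; rewrite /big; move: hDx; lia.
    lia.
- have hl : (q - p <= M) = false by rewrite leqNgt hs.
  try rewrite hs; try rewrite hl /=.
  have hs' : (q + x - p <= M) = false by apply/negbTE; rewrite -ltnNge; lia.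
  move: IH'; rewrite hs' /=.
  have -> : big M D x = true by apply/idP; rewrite /big; move: hDx; lia.
  lia.
Qed.
Fixpoint Bp (M D : nat) (t : tree) : nat :=
  let: Node cs := t in
  (count (big M D) (map tree_size cs)).-1 + sumn (map (Bp M D) cs).

Lemma goE_level M D E p cs q :
  treeAll (fun c => forall p, esum (cross M) (edges c p) <=
          gg D E (tree_size c) * Cc M p (p + tree_size c - 1) + Bp M D c) cs ->
  esum (cross M) (goE p cs q) <= Rl M D E p (map tree_size cs) q + sumn (map (Bp M D) cs).
Proof.
elim: cs q => [|c cs IH] q /=; first by rewrite /esum big_nil.
move=> [IHc IHcs]; rewrite esum_cons esum_cat /=.
have := IHc q; have := IH (q + tree_size c) IHcs; lia.
Qed.

Lemma path0 (ss : seq nat) : sorted leq ss -> path leq 0 ss.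
Proof. by case: ss => //= x s ->. Qed.

Lemma level M D E t p : M = 2 ^ E -> 1 <= D -> max_children D t -> light_sorted t ->
  esum (cross M) (edges t p) <=
  gg D E (tree_size t) * Cc M p (p + tree_size t - 1) + Bp M D t.
Proof.
move=> hM hD; elim/tree_ind2: t p => cs IH p; rewrite edges_Node.
move=> /andP [hsz hallm] /andP [hsort halls].
have IH' : treeAll (fun c => forall p, esum (cross M) (edges c p) <=
          gg D E (tree_size c) * Cc M p (p + tree_size c - 1) + Bp M D c) cs.
  elim: cs IH hsz hallm hsort halls {p} => [|c cs IHl] //= [IHc IHcs] hsz
    /andP [hc hcs] hsort /andP [lc lcs].
  split; first by move=> p; apply: IHc.
  apply: IHl => //; first by lia.
  by move: hsort; case: (cs) => //= c' cs' /andP [].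
apply: leq_trans (goE_level p p.+1 IH') _.
set ss := map tree_size cs.
have hss : sorted leq ss by rewrite /ss sorted_map.
have hpos : all (fun x => 0 < x) ss by rewrite /ss; elim: (cs) => //= c cs' ->; rewrite tree_size_gt0.
have hsz' : size ss <= D by rewrite size_map.
have hR := Rl_bound (s := (sumn ss).+1) hM (ltnSn p) hsz' hss hpos (ltnSn _).
have hL := @longc_bound M D p ss p.+1 0 0 (ltnSn p) (path0 hss) hpos ltac:(lia) ltac:(rewrite add0n; exact: hsz').
have hM1 : (p.+1 - p <= M) = true by apply/idP; have := expn_gt0 2 E; rewrite -hM; lia.
rewrite hM1 in hL.
move: hR; rewrite /= /Cc subnn muln0 add0n.
have -> : p + (sumn ss).+1 - 1 = p + sumn ss by lia.
rewrite -/(Cc M p (p + sumn ss)).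
move=> hR.
apply: (leq_trans (leq_add hR (leqnn _))).
rewrite -addnA leq_add2l.
case: (count (big M D) ss) hL => [|n] /=; lia.
Qed.

Lemma Bp_list M D cs :
  treeAll (fun c => M * (Bp M D c + big M D (tree_size c)) <= D * tree_size c) cs ->
  M * (sumn (map (Bp M D) cs) + count (big M D) (map tree_size cs))
    <= D * sumn (map tree_size cs) /\
  (count (big M D) (map tree_size cs) = 0 -> sumn (map (Bp M D) cs) = 0).
Proof.
elim: cs => [|c cs IH] /=; first by move=> _; split => //; lia.
move=> [hc hcs]; have [h1 h2] := IH hcs; split.
  move: hc h1; rewrite !mulnDr; lia.
case hb: (big M D (tree_size c)) => //= h0.
rewrite h2 // addn0; case: (posnP (Bp M D c)) => // hp.
move: hc hb; rewrite /big /=.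
have := leq_pmulr M hp.
move=> h3 h4 /negbT; rewrite -ltnNge; lia.
Qed.

Lemma Bp_bound M D t : 0 < M -> M * (Bp M D t + big M D (tree_size t)) <= D * tree_size t.
Proof.
move=> hM; elim/tree_ind2: t => cs IH.
have [h1 h2] := Bp_list IH.
rewrite /= -/(tree_size (Node cs)) tree_size_Node.
case hc: (count (big M D) (map tree_size cs)) h1 h2 => [|n] h1 h2 /=.
- rewrite h2 // add0n /big.
  by case h: (M <= D * _) => //=; rewrite add0n ?muln1 ?muln0.
- have hb : big M D (sumn (map tree_size cs)).+1.
    rewrite /big; have := leq_pmulr M (isT : 0 < n.+1).
    move: h1; rewrite mulnDr mulnS mulnS; lia.
  rewrite hb /=; move: h1; rewrite !mulnDr ?mulnS ?muln1; lia.
Qed.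

Lemma series_bound (a : nat -> nat) Y K :
  (forall k, 2 ^ k * a k <= (2 * k + 3) * Y) -> \sum_(k < K) a k <= 10 * Y.
Proof.
move=> ha.
have H : 2 ^ K * (\sum_(k < K) a k) + (4 * K + 10) * Y <= 10 * 2 ^ K * Y.
  elim: K => [|K IH]; first by rewrite big_ord0 expn0; lia.
  rewrite big_ord_recr /= expnS.
  have := ha K; move: IH.
  move: (2 ^ K) (\sum_(k < K) a k) (a K) => P S A h1 h2.
  nia.
have hp : 0 < 2 ^ K by rewrite expn_gt0.
rewrite -(leq_pmul2l hp); move: H; rewrite mulnCA; lia.
Qed.

Lemma esum_mono f g l : (forall e, e \in l -> f e.1 e.2 <= g e.1 e.2) -> esum f l <= esum g l.
Proof. by move=> h; rewrite /esum big_seq_cond [X in _ <= X]big_seq_cond; apply: leq_sum => e /andP [he _]; apply: h. Qed.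

Lemma esum_W K l : esum (W K) l = \sum_(k < K) 2 ^ k.+1 * esum (cross (4 ^ k)) l.
Proof.
rewrite /esum /W exchange_big /=; apply: eq_bigr => k _.
by rewrite big_distrr.
Qed.

Theorem mainTheorem3 :
  forall D : nat, 1 <= D ->
  exists C : nat,
    forall t : tree,
      max_children D t -> light_sorted t ->
      lf_energy t 0 <= C * tree_size t.
Proof.
move=> D hD; exists (20 * D) => t hmc hls.
set s := tree_size t.
rewrite lf_energy_edges.
have hs4 : s < 4 ^ s by apply: ltn_expl.
apply: (@leq_trans (esum (W s) (edges t 0))).
  apply: esum_mono => e he; have [_ [h1 h2]] := edges_range he.
  rewrite add0n -/s in h2; apply: dist_W; [exact: ltn_trans h1 (ltn_trans h2 hs4)|exact: ltn_trans h2 hs4].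
rewrite esum_W.
apply: (@leq_trans (\sum_(k < s) 2 ^ k.+1 *
   (gg D (2 * k) s * Cc (4 ^ k) 0 (0 + s - 1) + Bp (4 ^ k) D t))).
  apply: leq_sum => k _; rewrite leq_mul2l; apply/orP; right.
  apply: level => //; by rewrite expnM.
have -> : 20 * D * s = 10 * (2 * D * s) by lia.
apply: (series_bound (a := fun k => 2 ^ k.+1 *
   (gg D (2 * k) s * Cc (4 ^ k) 0 (0 + s - 1) + Bp (4 ^ k) D t))) => k.
have h4 : 0 < 4 ^ k by rewrite expn_gt0.
have hB := Bp_bound D t h4.
have hC : 4 ^ k * Cc (4 ^ k) 0 (0 + s - 1) <= s.
  rewrite /Cc div0n subn0 add0n mulnC; apply: leq_trans (leq_trunc_div _ _) _; lia.
have hg : gg D (2 * k) s <= D * (2 * k + 2).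
  rewrite /gg leq_mul2l; apply/orP; right; have := hE_le (2 * k) s; lia.
have hA := leq_mul hg hC.
rewrite mulnA.
have -> : 2 ^ k * 2 ^ k.+1 = 2 * 4 ^ k.
  by rewrite expnS mulnCA -expnD addnn -mul2n expnM.
move: hA hB; rewrite -/s.
move: (gg D (2 * k) s) (Cc (4 ^ k) 0 (0 + s - 1)) (Bp (4 ^ k) D t) (big (4 ^ k) D s) (4 ^ k) => g c b bb F.
nia.
Qed.
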